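(* Assume all hypotheses (i)–(v) of the following setting hold: (i) $(x,y)$ follow the IMCA model with parameters $(h,T,\lambda,\mu)$; (ii) $h:\mathbb{R}^d\to\mathbb{R}^d$ is invertible; (iii) each $T_i$ is differentiable and satisfies the strong exponential condition; (iv) there exist $k+1$ points $y^0,\dots,y^k$ with $L=\big(\lambda(y^1)-\lambda(y^0),\dots,\lambda(y^k)-\lambda(y^0)\big)$ invertible; (v) there are $f:\mathbb{R}^d\to\mathbb{R}^d$, differentiable $H_l:\mathbb{R}\to\mathbb{R}^{m_l}$ with $(m_1,\dots,m_d)$ a permutation of $(k_1,\dots,k_d)$, and $g:\mathcal{Y}\to\mathbb{R}^k$ with $\exp(-H(f(x))^\top g(y))/Z(y)=p(x\mid y)$ for all $x,y$, where $H(f(x))=(H_1(f_1(x)),\dots,H_d(f_d(x)))$. Assume further either (A) each $T_l$ is twice differentiable with $k_l\ge 2$ for all $l$, and both $h$ and $f$ are $\mathcal{D}^2$-diffeomorphisms; or (B) $k_l=1$ and $T_l$ is non-monotonic for all $l$, $h$ and $f$ are $C^1$-diffeomorphisms, and each $H_l$ has a unique extremum. Then there exist a permutation $\gamma$ of $\{1,\dots,d\}$ with $m_i=k_{\gamma(i)}$, invertible square matrices $A_i$ and vectors $b_i$ such that for every $i$ and every $x$, $H_i(f_i(x))=A_iT_{\gamma(i)}(z_{\gamma(i)})+b_i$, where $z=h^{-1}(x)$.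
   Context: IMCA model: a latent $z\in\mathbb{R}^d$ and an observed auxiliary variable $y\in\mathcal{Y}\subset\mathbb{R}^{d_y}$, with $z\sim p(z\mid y)$ and observation $x=h(z)$, where $p(z\mid y)=\mu(z)\exp\big(\sum_{i=1}^d T_i(z_i)^\top\lambda_i(y)-\Gamma(y)\big)$; here $\mu$ is an arbitrary (not necessarily factorized) base measure density, $T_i:\mathbb{R}\to\mathbb{R}^{k_i}$ are sufficient statistics, $\lambda_i:\mathcal{Y}\to\mathbb{R}^{k_i}$, $\Gamma(y)$ is the log-normalizer, $k=\sum_i k_i$, $T=(T_1,\dots,T_d)$, $\lambda=(\lambda_1,\dots,\lambda_d)$ stacked into $\mathbb{R}^k$. The strong exponential condition for $T_i$: for every measurable $U\subset\mathbb{R}$ and every $\eta\in\mathbb{R}^{k_i}$, if $u\mapsto T_i(u)^\top\eta$ is constant on $U$, then $U$ has Lebesgue measure zero or $\eta=0$. A $\mathcal{D}^2$-diffeomorphism is an invertible map such that all second-order cross-derivatives of the map and its inverse exist. *)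

(* Defs.v *)
From mathcomp Require Import all_boot all_order all_algebra all_fingroup.
From mathcomp Require Import all_classical all_reals all_analysis.
Set Implicit Arguments. Unset Strict Implicit. Unset Printing Implicit Defensive.
Import Order.TTheory GRing.Theory Num.Theory.
Import numFieldNormedType.Exports.
Local Open Scope classical_set_scope.
Local Open Scope ring_scope.

Definition evec (R : realType) (d : nat) (j : 'I_d) : 'rV[R]_d := delta_mx 0 j.

Definition strong_exponential (R : realType) (ki : nat) (Ti : R -> 'rV[R]_ki) :=
  forall (U : set R) (eta : 'rV[R]_ki), measurable U ->
    (exists c : R, forall u, U u -> (Ti u *m eta^T) 0 0 = c) ->
    (lebesgue_measure U = 0%E \/ eta = 0).

Definition monotonic (R : realType) (F : R -> R) :=
  (forall u v, u <= v -> F u <= F v) \/ (forall u v, u <= v -> F v <= F u).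

Definition is_extremum (R : realType) (F : R -> R) (t : R) :=
  (\forall s \near t, F t <= F s) \/ (\forall s \near t, F s <= F t).

Definition unique_extremum (R : realType) (F : R -> R) :=
  exists t, is_extremum F t /\ forall t', is_extremum F t' -> t' = t.

Definition partials1_exist (R : realType) (d : nat) (f : 'rV[R]_d -> 'rV[R]_d) :=
  forall (i j : 'I_d) (x : 'rV[R]_d), derivable (fun v => f v 0 i) x (evec R j).

Definition C1_diffeo (R : realType) (d : nat) (f finv : 'rV[R]_d -> 'rV[R]_d) :=
  cancel f finv /\ cancel finv f /\
  forall g, (g = f \/ g = finv) ->
    (forall x, differentiable g x) /\
    forall i j : 'I_d, continuous (fun x => 'D_(evec R j) (fun v => g v 0 i) x).

Definition D2_diffeo (R : realType) (d : nat) (f finv : 'rV[R]_d -> 'rV[R]_d) :=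
  cancel f finv /\ cancel finv f /\
  forall g, (g = f \/ g = finv) ->
    (forall x, differentiable g x) /\
    partials1_exist g /\
    forall (i j l : 'I_d) (x : 'rV[R]_d),
      derivable (fun w => 'D_(evec R j) (fun v => g v 0 i) w) x (evec R l).

(* Conditional density of z given y in the IMCA model:
   p(z|y) = mu(z) exp( sum_i T_i(z_i)^T lambda_i(y) - Gamma(y) ),
   written with the stacked vectors T(z), lambda(y) in R^k (k = sum_i k_i). *)
Definition imca_density (R : realType) (d dy : nat) (k : 'I_d -> nat)
  (mu : 'rV[R]_d -> R) (T : forall i : 'I_d, R -> 'rV[R]_(k i))
  (lam : forall i : 'I_d, 'rV[R]_dy -> 'rV[R]_(k i)) (Gam : 'rV[R]_dy -> R)
  (z : 'rV[R]_d) (y : 'rV[R]_dy) : R :=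
  mu z * expR (((mxrow (fun i => T i (z 0 i))) *m (mxrow (fun i => lam i y))^T) 0 0
               - Gam y).

(* Conditional density of x = h(z) given y (change of variables, hinv = h^{-1}):
   p(x|y) = p_z(h^{-1}(x)|y) |det J_{h^{-1}}(x)| *)
Definition obs_density (R : realType) (d dy : nat) (k : 'I_d -> nat)
  (mu : 'rV[R]_d -> R) (T : forall i : 'I_d, R -> 'rV[R]_(k i))
  (lam : forall i : 'I_d, 'rV[R]_dy -> 'rV[R]_(k i)) (Gam : 'rV[R]_dy -> R)
  (hinv : 'rV[R]_d -> 'rV[R]_d) (x : 'rV[R]_d) (y : 'rV[R]_dy) : R :=
  imca_density mu T lam Gam (hinv x) y * `| \det ('J hinv x) |.

(* Main.v *)
Require Import Defs.
From mathcomp Require Import all_boot all_order all_algebra all_fingroup.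
From mathcomp Require Import all_classical all_reals all_analysis.
From mathcomp Require Import ring lra.
Import Order.TTheory GRing.Theory Num.Theory.
Import numFieldNormedType.Exports.
Local Open Scope classical_set_scope.
Local Open Scope ring_scope.
Set Implicit Arguments. Unset Strict Implicit. Unset Printing Implicit Defensive.
Section B1.
Variable R : realType.

Lemma interior_ext (hi : R -> R) a b c : c \in `]a, b[ ->
  ((forall x, x \in `[a, b] -> hi x <= hi c) \/ (forall x, x \in `[a, b] -> hi c <= hi x)) ->
  is_extremum hi c.
Proof.
move=> cab [H|H]; [right|left]; near=> s; apply: H;
  (have : s \in `]a, b[ by near: s; exact: near_in_itvoo);
  rewrite !in_itv /= => /andP[h1 h2]; apply/andP; split; exact: ltW.
Unshelve. all: by end_near.
Qed.

Lemma hi_neq (hi : R -> R) t : continuous hi ->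
  (forall t', is_extremum hi t' -> t' = t) -> forall s, s != t -> hi s != hi t.
Proof.
move=> chi uniq s st; apply/negP => /eqP hst.
pose a := Num.min s t; pose b := Num.max s t.
have ab : a < b by rewrite /a /b; case: (ltgtP s t) st => //.
have hab : hi a = hi b by rewrite /a /b; case: (ltgtP s t) st.
have tnot : forall c, c \in `]a, b[ -> c != t.
  move=> c; rewrite in_itv /= /a /b; case: (ltgtP s t) => H /andP[h1 h2].
  - by rewrite lt_eqF.
  - by rewrite gt_eqF.
  - by rewrite H eqxx in st.
have cab : {within `[a, b], continuous hi} by exact: continuous_subspaceT.
have interior : forall c, c \in `[a, b] -> c != a -> c != b -> c \in `]a, b[.
  move=> c; rewrite !in_itv /= => /andP[h1 h2] ca cb.
  by rewrite !lt_neqAle h1 h2 eq_sym ca cb.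
have [cM cMin HM] := EVT_max (ltW ab) cab.
have [cm cmin Hm] := EVT_min (ltW ab) cab.
have noint : forall c, c \in `[a, b] ->
   ((forall x, x \in `[a, b] -> hi x <= hi c) \/ (forall x, x \in `[a, b] -> hi c <= hi x)) ->
   hi c = hi a.
  move=> c cin Hc; have [ca|ca] := eqVneq c a; first by rewrite ca.
  have [cb|cb] := eqVneq c b; first by rewrite cb hab.
  have ci := interior c cin ca cb.
  by have := tnot c ci; rewrite (uniq c (interior_ext ci Hc)) eqxx.
have eM := noint cM cMin (or_introl HM).
have em := noint cm cmin (or_intror Hm).
pose mid := (a + b) / 2.
have midin : mid \in `]a, b[ by rewrite in_itv /= !(midf_lt ab).
have Hmid : forall x, x \in `[a, b] -> hi x <= hi mid.
  have midc : mid \in `[a, b] by apply: subset_itv_oo_cc.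
  move=> x xin; have := HM x xin; have := Hm mid midc; rewrite eM em => h1 h2.
  exact: (le_trans h2 h1).
by have := tnot mid midin; rewrite (uniq mid (interior_ext midin (or_introl Hmid))) eqxx.
Qed.
End B1.
Section B2.
Variable R : realType.

Lemma hi_glob (hi : R -> R) t : continuous hi ->
  (forall s, s != t -> hi s != hi t) -> (\forall s \near t, hi t <= hi s) ->
  forall s, hi t <= hi s.
Proof.
move=> chi neq nt s; rewrite leNgt; apply/negP => lt.
have st : s != t by apply/negP => /eqP E; rewrite E ltxx in lt.
case: nt => e /= e0 He.
have cw : forall a b, {within `[a, b], continuous hi}.
  by move=> a b; exact: continuous_subspaceT.
case: (ltgtP s t) st => // H _.
- pose s' := Num.max s (t - e / 2).
  have s't : s' < t by rewrite /s' gt_max H /= ltrBlDr ltrDl divr_gt0.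
  have hs' : hi t <= hi s'.
    apply: He; rewrite /ball /= ger0_norm ?subr_ge0 ?(ltW s't) //.
    have : t - e / 2 <= s' by rewrite /s' le_max lexx orbT.
    lra.
  have ss' : s <= s' by rewrite /s' le_max lexx.
  have hv : Num.min (hi s) (hi s') <= hi t <= Num.max (hi s) (hi s').
    by rewrite ge_min le_max (ltW lt) hs' orbT.
  have [p pin hp] := IVT ss' (cw _ _) hv.
  move: pin; rewrite in_itv /= => /andP[_ ps'].
  by have := neq p (negbT (lt_eqF (le_lt_trans ps' s't))); rewrite hp eqxx.
- pose s' := Num.min s (t + e / 2).
  have s't : t < s' by rewrite /s' lt_min H /= ltrDl divr_gt0.
  have hs' : hi t <= hi s'.
    apply: He; rewrite /ball /= ler0_norm ?subr_le0 ?(ltW s't) // opprB.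
    have : s' <= t + e / 2 by rewrite /s' ge_min lexx orbT.
    lra.
  have ss' : s' <= s by rewrite /s' ge_min lexx.
  have hv : Num.min (hi s') (hi s) <= hi t <= Num.max (hi s') (hi s).
    by rewrite ge_min le_max (ltW lt) hs' !orbT.
  have [p pin hp] := IVT ss' (cw _ _) hv.
  move: pin; rewrite in_itv /= => /andP[ps' _].
  by have := neq p (negbT (gt_eqF (lt_le_trans s't ps'))); rewrite hp eqxx.
Qed.
End B2.
Section B3.
Variable R : realType.

Definition upd d (z : 'rV[R]_d) (l : 'I_d) (u : R) := z + (u - z 0 l) *: evec R l.

Lemma updE d (z : 'rV[R]_d) l u l' : upd z l u 0 l' = if l' == l then u else z 0 l'.
Proof.
rewrite /upd /evec !mxE /=; case: (eqVneq l' l) => [->|_].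
  by rewrite mulr1 addrC subrK.
by rewrite mulr0 addr0.
Qed.

Lemma updE' d (z : 'rV[R]_d) l u l' : l' != l -> upd z l u 0 l' = z 0 l'.
Proof. by rewrite updE => /negbTE ->. Qed.

Lemma updE1 d (z : 'rV[R]_d) l u : upd z l u 0 l = u.
Proof. by rewrite updE eqxx. Qed.

Lemma coreB d (tau : 'I_d -> R -> R) (n : 'I_d -> R) (hi : R -> R)
  (phi : 'rV[R]_d -> R) (c : R) :
  (forall l, exists u v, tau l u != tau l v) ->
  continuous hi -> unique_extremum hi ->
  (forall z w, continuous (fun s : R => phi (z + s *: w))) ->
  (forall t, exists z, phi z = t) ->
  (forall z, hi (phi z) = \sum_l tau l (z 0 l) * n l + c) ->
  forall l1 l2, n l1 != 0 -> n l2 != 0 -> l1 = l2.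
Proof.
move=> tnc chi [t [ext uniq]] cphi surj rel l1 l2 n1 n2.
apply/eqP; apply: contraT => l12.
have neq := hi_neq chi uniq.
have [eps [eps0 Hsgn]] : exists eps : R, eps != 0 /\ forall s, 0 <= eps * (hi s - hi t).
  case: ext => E.
    exists 1; split; first exact: oner_neq0.
    by move=> s; rewrite mul1r subr_ge0; apply: hi_glob.
  exists (-1); split; first by rewrite oppr_eq0 oner_neq0.
  move=> s; rewrite mulN1r opprB subr_ge0.
  have := @hi_glob R (fun x => - hi x) t _ _ _ s; rewrite lerN2; apply.
  - by move=> x; apply: continuousN; exact: chi.
  - by move=> x xt; rewrite eqr_opp; exact: neq.
  - by near=> x; rewrite lerN2; near: x.
have [z0 hz0] := surj t.
pose term l (w : 'rV[R]_d) := (tau l (w 0 l) - tau l (z0 0 l)) * n l.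
have Gdiff : forall w, hi (phi w) - hi t = \sum_l term l w.
  move=> w; rewrite -hz0 !rel opprD addrACA subrr addr0 -sumrB; apply: eq_bigr => l _.
  by rewrite /term mulrBl.
have nonneg : forall l w, 0 <= eps * term l w.
  move=> l w; have := Hsgn (phi (upd z0 l (w 0 l))); rewrite Gdiff.
  rewrite (bigD1 l) //= big1 ?addr0; first by rewrite /term updE1.
  by move=> l' /updE' E; rewrite /term E subrr mul0r.
pose bad l w := term l w != 0.
have badP : forall w, phi w != t -> exists l, bad l w.
  move=> w wt; apply: contrapT => nex.
  have allz : forall l, term l w = 0.
    by move=> l; apply/eqP; apply: contrapT => H; apply: nex; exists l; exact/negP.
  have := neq (phi w) wt; rewrite -subr_eq0 Gdiff big1 ?eqxx // => l _; exact: allz.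
have badN : forall l w, bad l w -> phi w != t.
  move=> l w bl; apply/eqP => E.
  have : eps * (hi (phi w) - hi t) = 0 by rewrite E subrr mulr0.
  rewrite Gdiff mulr_sumr => /eqP; rewrite psumr_eq0 /=; last by move=> i _; exact: nonneg.
  move=> /allP /(_ l (mem_index_enum l)) /=; rewrite mulf_eq0 (negbTE eps0) /=.
  by rewrite (negbTE bl).
have seg : forall (z w : 'rV[R]_d) l, z 0 l = w 0 l -> bad l z -> (phi z < t) = (phi w < t).
  move=> z w l zw bz.
  pose f s := phi (z + s *: (w - z)).
  have fb : forall s, f s != t.
    move=> s; apply: (badN l); rewrite /bad /term !mxE.
    by rewrite -zw subrr mulr0 addr0.
  have f0 : f 0 = phi z by rewrite /f scale0r addr0.
  have f1 : f 1 = phi w by rewrite /f scale1r addrC subrK.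
  have cf : {within `[0, 1], continuous f} by apply: continuous_subspaceT; exact: cphi.
  have hz := fb 0; have hw := fb 1; rewrite f0 in hz; rewrite f1 in hw.
  case: (ltgtP (phi z) t) hz => // hz _; case: (ltgtP (phi w) t) hw => // hw _.
  - have hv : Num.min (f 0) (f 1) <= t <= Num.max (f 0) (f 1).
      by rewrite f0 f1 ge_min le_max (ltW hz) (ltW hw) orbT.
    by have [s _ fs] := IVT ler01 cf hv; have := fb s; rewrite fs eqxx.
  - have hv : Num.min (f 0) (f 1) <= t <= Num.max (f 0) (f 1).
      by rewrite f0 f1 ge_min le_max (ltW hz) (ltW hw) orbT.
    by have [s _ fs] := IVT ler01 cf hv; have := fb s; rewrite fs eqxx.
have getb : forall j, n j != 0 -> exists b, bad j (upd z0 j b).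
  move=> j nj; have [u [v uv]] := tnc j.
  have [E|E] := eqVneq (tau j u) (tau j (z0 0 j)).
    exists v; rewrite /bad /term updE1 mulf_neq0 // subr_eq0 -E eq_sym //.
  by exists u; rewrite /bad /term updE1 mulf_neq0 // subr_eq0.
have [b1 hb1] := getb l1 n1; have [b2 hb2] := getb l2 n2.
pose ws := upd (upd z0 l1 b1) l2 b2.
have ws1 : ws 0 l1 = b1 by rewrite /ws updE' ?updE1 // eq_sym.
have ws2 : ws 0 l2 = b2 by rewrite /ws updE1.
have badj : forall j (w : 'rV[R]_d), (j == l1) || (j == l2) -> w 0 j = ws 0 j -> bad j w.
  move=> j w /orP[/eqP->|/eqP->] E.
    by move: hb1; rewrite /bad /term updE1 E ws1.
  by move: hb2; rewrite /bad /term updE1 E ws2.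
have claim : forall z, phi z != t -> (phi z < t) = (phi ws < t).
  move=> z zt; have [l bl] := badP z zt.
  pose j := if l == l1 then l2 else l1.
  have jl : j != l by rewrite /j; case: (eqVneq l l1) => [->|] //; rewrite eq_sym.
  have jin : (j == l1) || (j == l2) by rewrite /j; case: (l == l1); rewrite eqxx ?orbT.
  pose z1 := upd z j (ws 0 j).
  rewrite (seg z z1 l) //; last by rewrite /z1 updE' // eq_sym.
  apply: (seg _ _ j); first by rewrite /z1 updE1.
  by apply: badj => //; rewrite /z1 updE1.
have [zp hzp] := surj (t + 1); have [zm hzm] := surj (t - 1).
have := claim zp; have := claim zm; rewrite hzp hzm.
have -> : t - 1 < t by rewrite ltrBlDr ltrDl ltr01.
have -> : t + 1 < t = false by apply/negbTE; rewrite -leNgt lerDl ler01.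
move=> Hm Hp.
have h1 : t - 1 != t by rewrite lt_eqF // ltrBlDr ltrDl ltr01.
have h2 : t + 1 != t by rewrite gt_eqF // ltrDl ltr01.
by have := Hm h1; rewrite -(Hp h2).
Unshelve. all: by end_near.
Qed.
End B3.
Section A1.
Variable R : realType.

Lemma DE n m (g : R -> 'M[R]_(n, m)) u i j : derivable g u 1 ->
  is_derive u 1 (fun s => g s i j) ('D_1 g u i j).
Proof.
move=> dg; have := dg; rewrite derivable_mxP => /(_ i j) dgij.
rewrite (derive_mx dg) mxE; exact: derivableP.
Qed.

Lemma DQ n q (g : R -> 'rV[R]_n) (Q : 'M[R]_(n, q)) u j : derivable g u 1 ->
  is_derive u 1 (fun s => (g s *m Q) 0 j) (('D_1 g u *m Q) 0 j).
Proof.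
move=> dg.
have -> : (fun s => (g s *m Q) 0 j) = \sum_(a < n) (fun s => g s 0 a * Q a j).
  by rewrite fct_sumE; apply/funext => s; rewrite !mxE.
rewrite mxE; apply: is_derive_sum => a.
have -> : (fun s => g s 0 a * Q a j) = (fun s => Q a j *: g s 0 a).
  by apply/funext => s; rewrite mulrC.
rewrite mulrC; have := DE 0 a dg => H.
exact: is_deriveZ.
Qed.

Lemma DC n (g : R -> 'rV[R]_n) (Q : 'cV[R]_n) : (forall u, derivable g u 1) ->
  (forall u, 'D_1 g u *m Q = 0) -> forall u v, g u *m Q = g v *m Q.
Proof.
move=> dg D0 u v; apply/matrixP => i j; rewrite !ord1.
apply: (@is_derive_0_is_cst R (fun s => (g s *m Q) 0 0)) => x.
by have := DQ Q 0 (dg x); rewrite D0 mxE.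
Qed.

Lemma SE0 k (T : R -> 'rV[R]_k) (Q : 'cV[R]_k) : strong_exponential T ->
  (forall u v, T u *m Q = T v *m Q) -> Q = 0.
Proof.
move=> se cst.
have [|m0|] := se [set` `[(0:R), 1]] Q^T (measurable_itv _).
- by exists ((T 0 *m Q) 0 0) => u _; rewrite trmxK (cst u 0).
- move: m0; rewrite lebesgue_measure_itv /= lte_fin ltr01 => /eqP.
  by rewrite oppr0 -EFinD addr0 eqe oner_eq0.
- by move=> E; rewrite -[Q]trmxK E trmx0.
Qed.

Lemma SE_deriv k (T : R -> 'rV[R]_k) (Q : 'cV[R]_k) : strong_exponential T ->
  (forall u, derivable T u 1) -> (forall u, 'D_1 T u *m Q = 0) -> Q = 0.
Proof. move=> se dT D0; exact: (SE0 se (DC dT D0)). Qed.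

End A1.
Section A2.
Variable R : realType.

Lemma upd_id d (z : 'rV[R]_d) l : upd z l (z 0 l) = z.
Proof. by rewrite /upd subrr scale0r addr0. Qed.

Lemma upd_diff d (z : 'rV[R]_d) l x : differentiable (upd z l) x.
Proof.
rewrite /upd.
have -> : (fun s => z + (s - z 0 l) *: evec R l) = (cst z) + (fun s : R => (s - z 0 l) *: evec R l).
  by apply/funext.
apply: differentiableD; first exact: differentiable_cst.
apply: differentiableZl.
have -> : (fun s : R => s - z 0 l) = id + cst (- z 0 l) by apply/funext.
apply: differentiableD => //; exact: differentiable_cst.
Qed.

Lemma chainA d p n (Hi : R -> 'rV[R]_p) (phi : 'rV[R]_d -> R) (g : R -> 'rV[R]_n)
  (Q : 'M[R]_(n, p)) (K : 'rV[R]_p) (z : 'rV[R]_d) l :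
  (forall u, derivable Hi u 1) -> (forall z, differentiable phi z) ->
  derivable g (z 0 l) 1 ->
  (forall s, Hi (phi (upd z l s)) = g s *m Q + K) ->
  exists sc, 'D_1 g (z 0 l) *m Q = sc *: 'D_1 Hi (phi z).
Proof.
move=> dH dphi dg rel.
pose psi := fun s => phi (upd z l s).
have dpsi : derivable psi (z 0 l) 1.
  apply/derivable1_diffP; rewrite /psi.
  have -> : (fun s => phi (upd z l s)) = phi \o upd z l by [].
  apply: differentiable_comp; [exact: upd_diff | exact: dphi].
exists ('D_1 psi (z 0 l)); apply/matrixP => i j; rewrite !ord1 [RHS]mxE.
pose f := fun s => Hi (psi s) 0 j.
have f1 : is_derive (z 0 l) 1 f (('D_1 g (z 0 l) *m Q) 0 j + 0).
  have -> : f = (fun s => (g s *m Q) 0 j) + cst (K 0 j).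
    by apply/funext => s; rewrite /f /psi rel [LHS]mxE.
  apply: is_deriveD; exact: DQ.
have f2 : is_derive (z 0 l) 1 f ('D_1 Hi (psi (z 0 l)) 0 j * 'D_1 psi (z 0 l)).
  have -> : f = (fun t => Hi t 0 j) \o psi by [].
  apply: is_derive1_comp; [exact: DE | exact: derivableP].
have := @derive_val _ _ _ _ _ _ _ f1; rewrite (@derive_val _ _ _ _ _ _ _ f2) addr0 => <-.
by rewrite /psi upd_id mulrC.
Qed.
End A2.
Section A3.
Variable R : realType.

Lemma coreA d (k : 'I_d -> nat) p (T : forall l, R -> 'rV[R]_(k l))
  (C : forall l, 'M[R]_(k l, p)) (Hi : R -> 'rV[R]_p) (phi : 'rV[R]_d -> R)
  (c : 'rV[R]_p) :
  (2 <= p)%N -> (forall l u, derivable (T l) u 1) ->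
  (forall l, strong_exponential (T l)) ->
  (forall u, derivable Hi u 1) -> (forall z, differentiable phi z) ->
  (forall eta : 'cV[R]_p, (forall l, C l *m eta = 0) -> eta = 0) ->
  (forall z, Hi (phi z) = \sum_l T l (z 0 l) *m C l + c) ->
  forall l1 l2, C l1 != 0 -> C l2 != 0 -> l1 = l2.
Proof.
move=> p2 dT seT dH dphi inj rel l1 l2 C1 C2.
apply/eqP; apply: contraT => l12.
have chain : forall (z : 'rV[R]_d) l, exists sc,
    'D_1 (T l) (z 0 l) *m C l = sc *: 'D_1 Hi (phi z).
  move=> z l.
  apply: (@chainA R d p (k l) Hi phi (T l) (C l)
     (\sum_(l' | l' != l) T l' (z 0 l') *m C l' + c) z l) => // s.
  rewrite rel (bigD1 l) //= updE1 addrA; congr (_ + _ + _).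
  by apply: eq_bigr => l' l'l; rewrite updE'.
have nz : forall l, C l != 0 -> exists u, 'D_1 (T l) u *m C l != 0.
  move=> l Cl; apply: contrapT => H.
  have H0 : forall u, 'D_1 (T l) u *m C l = 0.
    by move=> u; apply/eqP; apply: contrapT => Hn; apply: H; exists u; exact/negP.
  have Hcol : forall j, col j (C l) = 0.
    move=> j; apply: (SE_deriv (seT l) (dT l)) => u.
    by rewrite colE mulmxA H0 mul0mx.
  move: Cl; have -> : C l = 0; last by rewrite eqxx.
  apply/matrixP => i j; have := congr1 (fun M : 'cV[R]_(k l) => M i 0) (Hcol j).
  by rewrite !mxE.
have par : forall (z : 'rV[R]_d) l l', 'D_1 (T l') (z 0 l') *m C l' != 0 ->
    exists a, 'D_1 (T l) (z 0 l) *m C l = a *: ('D_1 (T l') (z 0 l') *m C l').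
  move=> z l l' nz'.
  have [s Hs] := chain z l; have [s' Hs'] := chain z l'.
  have s'0 : s' != 0 by apply: contraNneq nz' => E; rewrite Hs' E scale0r.
  by exists (s / s'); rewrite Hs Hs' scalerA divfK.
have [u1 hu1] := nz l1 C1; have [u2 hu2] := nz l2 C2.
pose w1 := 'D_1 (T l1) u1 *m C l1.
have span : forall l u, exists a, 'D_1 (T l) u *m C l = a *: w1.
  move=> l u; case: (eqVneq l l1) => [->|ll1].
  - pose z := upd (upd 0 l1 u) l2 u2.
    have z1 : z 0 l1 = u by rewrite /z updE' ?updE1 // eq_sym.
    have z2 : z 0 l2 = u2 by rewrite /z updE1.
    have nz2 : 'D_1 (T l2) (z 0 l2) *m C l2 != 0 by rewrite z2.
    have [a Ha] := par z l1 l2 nz2.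
    pose z' := upd (upd 0 l1 u1) l2 u2.
    have z'1 : z' 0 l1 = u1 by rewrite /z' updE' ?updE1 // eq_sym.
    have z'2 : z' 0 l2 = u2 by rewrite /z' updE1.
    have nz1 : 'D_1 (T l1) (z' 0 l1) *m C l1 != 0 by rewrite z'1.
    have [a' Ha'] := par z' l2 l1 nz1.
    exists (a * a'); rewrite -z1 Ha z2 -z'2 Ha' z'1 scalerA //.
  - pose z := upd (upd 0 l1 u1) l u.
    have z1 : z 0 l1 = u1 by rewrite /z updE' ?updE1 // eq_sym.
    have z2 : z 0 l = u by rewrite /z updE1.
    have nz1 : 'D_1 (T l1) (z 0 l1) *m C l1 != 0 by rewrite z1.
    have [a Ha] := par z l l1 nz1.
    by exists a; rewrite -z2 Ha z1.
have [eta [eta0 weta]] : exists eta : 'cV[R]_p, eta != 0 /\ w1 *m eta = 0.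
  pose K := kermx w1^T.
  have rK : (0 < \rank K)%N.
    rewrite /K mxrank_ker; have := rank_leq_col w1^T.
    by move=> h; rewrite subn_gt0; exact: leq_ltn_trans h p2.
  have K0 : K != 0 by rewrite -mxrank_eq0 -lt0n.
  have [i Ki] : exists i, row i K != 0.
    apply: contrapT => H; move: K0; rewrite (_ : K = 0) ?eqxx //.
    apply/row_matrixP => i; rewrite row0; apply/eqP; apply: contrapT => Hn.
    by apply: H; exists i; exact/negP.
  exists (row i K)^T; split.
    by apply: contraNneq Ki => E; rewrite -[row i K]trmxK E trmx0.
  have : row i K *m w1^T = 0 by apply/sub_kermxP; exact: row_sub.
  by move/(congr1 trmx); rewrite trmx_mul trmxK trmx0.
have Ceta : forall l, C l *m eta = 0.
  move=> l; apply: (SE_deriv (seT l) (dT l)) => u.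
  by have [a Ha] := span l u; rewrite mulmxA Ha -scalemxAl weta scaler0.
by move: eta0; rewrite (inj eta Ceta) eqxx.
Qed.
End A3.
Section C1.
Variable R : realType.

Lemma mxrow_mul_sum d (k : 'I_d -> nat) n (T : forall i, 'rV[R]_(k i)) (w : 'M[R]_(\sum_i k i, n)) :
  mxrow T *m w = \sum_l T l *m submxcol w l.
Proof. by rewrite -{1}(submxcolK w) mul_mxrow_mxcol. Qed.

Lemma Tr_sep d (k : 'I_d -> nat) (T : forall i, R -> 'rV[R]_(k i))
  (w : 'cV[R]_(\sum_i k i)) :
  (forall i, strong_exponential (T i)) ->
  (forall z1 z2 : 'rV[R]_d, mxrow (fun i => T i (z1 0 i)) *m w
                          = mxrow (fun i => T i (z2 0 i)) *m w) -> w = 0.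
Proof.
move=> se H.
have wl : forall l, submxcol w l = 0.
  move=> l; apply: (SE0 (se l)) => u v.
  have := H (upd 0 l u) (upd 0 l v); rewrite !mxrow_mul_sum.
  rewrite (bigD1 l) //= [X in _ = X -> _](bigD1 l) //= !updE1.
  have -> : \sum_(i < d | i != l) T i (upd 0 l v 0 i) *m submxcol w i
         = \sum_(i < d | i != l) T i (upd 0 l u 0 i) *m submxcol w i.
    by apply: eq_bigr => i il; rewrite !updE'.
  by move/addIr.
by rewrite -(submxcolK w) (eq_mxcol wl) mxcol0.
Qed.

Lemma LR d dy (k m : 'I_d -> nat) (Ys : set 'rV[R]_dy)
  (h hinv : 'rV[R]_d -> 'rV[R]_d) (mu : 'rV[R]_d -> R)
  (T : forall i : 'I_d, R -> 'rV[R]_(k i))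
  (lam : forall i : 'I_d, 'rV[R]_dy -> 'rV[R]_(k i))
  (Gam : 'rV[R]_dy -> R) (f : 'rV[R]_d -> 'rV[R]_d)
  (H : forall l : 'I_d, R -> 'rV[R]_(m l))
  (g : 'rV[R]_dy -> 'rV[R]_(\sum_(l < d) m l)) (Z : 'rV[R]_dy -> R) :
  cancel h hinv ->
  (forall i, strong_exponential (T i)) ->
  (exists ys : 'I_(\sum_(i < d) k i).+1 -> 'rV[R]_dy,
     (forall j, Ys (ys j)) /\
     (\matrix_(a, b) (mxrow (fun i => lam i (ys (lift ord0 b)))
                     - mxrow (fun i => lam i (ys ord0))) 0 a) \in unitmx) ->
  (exists s : 'S_d, forall l, m l = k (s l)) ->
  (forall y, Ys y -> 0 < Z y) ->
  (forall x y, Ys y ->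
     expR (- ((mxrow (fun l => H l (f x 0 l))) *m (g y)^T) 0 0) / Z y
     = obs_density mu T lam Gam hinv x y) ->
  exists (B : 'M[R]_(\sum_(i < d) k i, \sum_(l < d) m l))
         (N : 'M[R]_(\sum_(l < d) m l, \sum_(i < d) k i))
         (c : 'rV[R]_(\sum_(l < d) m l)),
    [/\ B *m N = 1%:M, N *m B = 1%:M &
    forall x, mxrow (fun l => H l (f x 0 l)) = mxrow (fun i => T i (hinv x 0 i)) *m B + c].
Proof.
move=> hK se [ys [Hys Lu]] [s hs] Zpos E.
pose Tr x := mxrow (fun i => T i (hinv x 0 i)).
pose Hr x := mxrow (fun l => H l (f x 0 l)).
pose Lam y := mxrow (fun i => lam i y).
pose P x := mu (hinv x) * `|\det ('J hinv x)|.
pose D x y := - (Hr x *m (g y)^T) 0 0 - ln (Z y) - (Tr x *m (Lam y)^T) 0 0 + Gam y.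
have PD : forall x y, Ys y -> P x = expR (D x y).
  move=> x y Yy; have := E x y Yy.
  rewrite /obs_density /imca_density -/(Tr x) -/(Lam y) -/(Hr x).
  rewrite -[Z y](lnK (_ : Z y \is Num.pos)) ?posrE ?Zpos // -expRB => EE.
  have e1 : P x * expR ((Tr x *m (Lam y)^T) 0 0 - Gam y)
           = expR (- (Hr x *m (g y)^T) 0 0 - ln (Z y)) by rewrite EE /P mulrAC.
  have -> : D x y = (- (Hr x *m (g y)^T) 0 0 - ln (Z y))
                    - ((Tr x *m (Lam y)^T) 0 0 - Gam y) by rewrite /D; ring.
  by rewrite expRB -e1 mulfK // gt_eqF // expR_gt0.
have Dc : forall x y, Ys y -> D x y = D x (ys ord0).
  by move=> x y Yy; apply: expR_inj; rewrite -!PD.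
pose Lm := \matrix_(a, b) (Lam (ys (lift ord0 b)) - Lam (ys ord0)) 0 a.
pose Gm := \matrix_(a, b) (g (ys (lift ord0 b)) - g (ys ord0)) 0 a.
pose cv := \row_b (ln (Z (ys ord0)) - ln (Z (ys (lift ord0 b)))
                   + Gam (ys (lift ord0 b)) - Gam (ys ord0)).
have key : forall x, Tr x *m Lm = - (Hr x *m Gm) + cv.
  move=> x; apply/matrixP => i b; rewrite !ord1 !mxE.
  have := Dc x _ (Hys (lift ord0 b)); rewrite /D.
  set A1 := (Hr x *m _) 0 0; set A0 := (Hr x *m (g (ys ord0))^T) 0 0.
  set B1 := (Tr x *m _) 0 0; set B0 := (Tr x *m (Lam (ys ord0))^T) 0 0.
  have -> : \sum_j Tr x 0 j * Lm j b = B1 - B0.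
    rewrite /B1 /B0 !mxE -sumrB; apply: eq_bigr => j _.
    by rewrite /Lm !mxE mulrBr.
  have -> : \sum_j Hr x 0 j * Gm j b = A1 - A0.
    rewrite /A1 /A0 !mxE -sumrB; apply: eq_bigr => j _.
    by rewrite /Gm !mxE mulrBr.
  move=> EE; apply/eqP; rewrite -subr_eq0; apply/eqP.
  move: EE; rewrite /A1 /A0 /B1 /B0; lra.
pose N' := - Gm *m invmx Lm.
pose c' := cv *m invmx Lm.
have TrN : forall x, Tr x = Hr x *m N' + c'.
  move=> x; rewrite /N' /c' mulmxA mulmxN -mulmxDl -key.
  by rewrite mulmxK.
have kerN : forall w : 'cV[R]_(\sum_(i < d) k i), N' *m w = 0 -> w = 0.
  move=> w Nw; apply: (Tr_sep se) => z1 z2.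
  have := TrN (h z1); have := TrN (h z2); rewrite /Tr !hK => -> ->.
  by rewrite !mulmxDl -(mulmxA (Hr (h z1))) -(mulmxA (Hr (h z2))) Nw !mulmx0.
have sumkm : (\sum_(l < d) m l = \sum_(i < d) k i)%N.
  rewrite [RHS](reindex_inj (@perm_inj _ s)) /=; apply: eq_bigr => l _; exact: hs.
have rN : \rank N' = (\sum_(i < d) k i)%N.
  apply/eqP; rewrite eqn_leq rank_leq_col /=.
  have K0 : kermx N'^T = 0.
    apply/row_matrixP => i; rewrite row0.
    have : row i (kermx N'^T) *m N'^T = 0 by apply/sub_kermxP; exact: row_sub.
    move/(congr1 trmx); rewrite trmx_mul trmxK trmx0 => /kerN E0.
    by rewrite -[row i _]trmxK E0 trmx0.
  have := mxrank_ker N'^T; rewrite K0 mxrank0 mxrank_tr => /eqP.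
  by rewrite eq_sym subn_eq0.
have [B1 HB1] : exists B1, B1 *m N' = 1%:M.
  by apply/row_fullP; rewrite /row_full rN.
have [B2 HB2] : exists B2, N' *m B2 = 1%:M.
  by apply/row_freeP; rewrite /row_free rN sumkm.
have B12 : B1 = B2 by rewrite -[B1]mulmx1 -HB2 mulmxA HB1 mul1mx.
exists B1, N', (- (c' *m B1)); split => //; first by rewrite B12.
move=> x; rewrite -/(Hr x) -/(Tr x) TrN mulmxDl -mulmxA B12 HB2 mulmx1 -B12.
by rewrite addrK.
Qed.
End C1.
Section D1.
Variable R : realType.

Lemma blk1_diag d (p : 'I_d -> nat) (a : 'I_d) :
  submxblock (1%:M : 'M[R]_(\sum_i p i)) a a = 1%:M.
Proof.
by apply/matrixP => x y; rewrite /submxblock !mxE -val_eqE tagnat.eq_Rank eqxx /= val_eqE.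
Qed.

Lemma blk1_off d (p : 'I_d -> nat) (a b : 'I_d) : a != b ->
  submxblock (1%:M : 'M[R]_(\sum_i p i)) a b = 0.
Proof.
by move=> ab; apply/matrixP => x y; rewrite /submxblock !mxE -val_eqE tagnat.eq_Rank (negbTE ab).
Qed.

Lemma blk_mul d (p q r : 'I_d -> nat) (X : 'M[R]_(\sum_i p i, \sum_i q i))
  (Y : 'M[R]_(\sum_i q i, \sum_i r i)) a b :
  submxblock (X *m Y) a b = \sum_j submxblock X a j *m submxblock Y j b.
Proof. by rewrite -{1}(submxblockK X) -{1}(submxblockK Y) mul_mxblock mxblockK. Qed.

Lemma ord_uniq n (e : n = 1%N) (x y : 'I_n) : x = y.
Proof.
apply: val_inj => /=; have := ltn_ord x; have := ltn_ord y.
move: (nat_of_ord x) (nat_of_ord y) => u v; rewrite e !ltnS !leqn0 => /eqP -> /eqP ->.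
by [].
Qed.

Lemma sum_one n (e : n = 1%N) (F : 'I_n -> R) x0 : \sum_j F j = F x0.
Proof.
rewrite (bigD1 x0) //= big1 ?addr0 // => j /negP; by rewrite (ord_uniq e j x0) eqxx.
Qed.

Lemma aff_diff d (z w : 'rV[R]_d) x : differentiable (fun s : R => z + s *: w) x.
Proof.
have -> : (fun s : R => z + s *: w) = (cst z) + (fun s : R => s *: w) by apply/funext.
apply: differentiableD; first exact: differentiable_cst.
by apply: differentiableZl.
Qed.

Lemma coreB_mx d (k : 'I_d -> nat) p (T : forall l, R -> 'rV[R]_(k l))
  (C : forall l, 'M[R]_(k l, p)) (Hi : R -> 'rV[R]_p) (phi : 'rV[R]_d -> R)
  (c : 'rV[R]_p) :
  (forall l, k l = 1%N) -> p = 1%N ->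
  (forall l (j : 'I_(k l)), ~ monotonic (fun u => T l u 0 j)) ->
  (forall u, derivable Hi u 1) ->
  (forall j : 'I_p, unique_extremum (fun t => Hi t 0 j)) ->
  (forall z, differentiable phi z) ->
  (forall t, exists z, phi z = t) ->
  (forall z, Hi (phi z) = \sum_l T l (z 0 l) *m C l + c) ->
  forall l1 l2, C l1 != 0 -> C l2 != 0 -> l1 = l2.
Proof.
move=> hk hp nmon dH uext dphi surj rel l1 l2 C1 C2.
have ka : forall l, (0 < k l)%N by move=> l; rewrite hk.
have pb : (0 < p)%N by rewrite hp.
pose a l := Ordinal (ka l).
pose b := Ordinal pb.
have Cn : forall l, C l != 0 -> C l (a l) b != 0.
  move=> l; apply: contraNN => /eqP E; apply/eqP/matrixP => i j.
  by rewrite (ord_uniq (hk l) i (a l)) (ord_uniq hp j b) E mxE.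
apply: (@coreB R d (fun l u => T l u 0 (a l)) (fun l => C l (a l) b)
          (fun t => Hi t 0 b) phi (c 0 b)); last first.
- exact: Cn.
- exact: Cn.
- move=> z; rewrite rel !mxE summxE; congr (_ + _); apply: eq_bigr => l _.
  by rewrite !mxE (sum_one (hk l) _ (a l)).
- exact: surj.
- move=> z w s; apply: differentiable_continuous.
  have -> : (fun s0 : R => phi (z + s0 *: w)) = phi \o (fun s0 : R => z + s0 *: w) by [].
  apply: differentiable_comp; [exact: aff_diff | exact: dphi].
- exact: uext.
- move=> t; apply: differentiable_continuous; apply/derivable1_diffP.
  by have := dH t; rewrite derivable_mxP; apply.
- move=> l; apply: contrapT => H0; apply: (nmon l (a l)); left => u v _.
  have -> : T l u 0 (a l) = T l v 0 (a l); last by [].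
  apply/eqP; apply: contrapT => Hn; apply: H0; exists u, v; exact/negP.
Qed.
End D1.
Unset Implicit Arguments.
Unset Strict Implicit.
Theorem mainTheorem9 (R : realType) (d dy : nat) (k m : 'I_d -> nat)
  (Ys : set 'rV[R]_dy)
  (h hinv : 'rV[R]_d -> 'rV[R]_d)
  (mu : 'rV[R]_d -> R)
  (T : forall i : 'I_d, R -> 'rV[R]_(k i))
  (lam : forall i : 'I_d, 'rV[R]_dy -> 'rV[R]_(k i))
  (Gam : 'rV[R]_dy -> R)
  (f : 'rV[R]_d -> 'rV[R]_d)
  (H : forall l : 'I_d, R -> 'rV[R]_(m l))
  (g : 'rV[R]_dy -> 'rV[R]_(\sum_(l < d) m l))
  (Z : 'rV[R]_dy -> R) :
  (* (i) IMCA model: mu is a (nonnegative) base density *)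
  (forall z, 0 <= mu z) ->
  (* (ii) h invertible, with inverse hinv *)
  cancel h hinv -> cancel hinv h ->
  (* (iii) each T_i differentiable and strongly exponential *)
  (forall i u, derivable (T i) u 1) ->
  (forall i, strong_exponential (T i)) ->
  (* (iv) k+1 points y^0..y^k in Y with L invertible *)
  (exists ys : 'I_(\sum_(i < d) k i).+1 -> 'rV[R]_dy,
     (forall j, Ys (ys j)) /\
     (\matrix_(a, b) (mxrow (fun i => lam i (ys (lift ord0 b)))
                     - mxrow (fun i => lam i (ys ord0))) 0 a) \in unitmx) ->
  (* (v) f, differentiable H_l, (m_l) a permutation of (k_l), g, Z *)
  (forall l u, derivable (H l) u 1) ->
  (exists s : 'S_d, forall l, m l = k (s l)) ->
  (forall y, Ys y -> 0 < Z y) ->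
  (forall x y, Ys y ->
     expR (- ((mxrow (fun l => H l (f x 0 l))) *m (g y)^T) 0 0) / Z y
     = obs_density mu T lam Gam hinv x y) ->
  (* case (A) or case (B) *)
  ((forall l, (2 <= k l)%N) /\
   (forall l u, derivable (derive1 (T l)) u 1) /\
   D2_diffeo h hinv /\ (exists finv, D2_diffeo f finv))
  \/
  ((forall l, k l = 1%N) /\
   (forall l (j : 'I_(k l)), ~ monotonic (fun u => T l u 0 j)) /\
   C1_diffeo h hinv /\ (exists finv, C1_diffeo f finv) /\
   (forall l (j : 'I_(m l)), unique_extremum (fun t => H l t 0 j))) ->
  exists gam : 'S_d, forall i : 'I_d,
    m i = k (gam i) /\
    exists (A : 'M[R]_(k (gam i), m i)) (b : 'rV[R]_(m i)),
      (exists B : 'M[R]_(m i, k (gam i)), A *m B = 1%:M /\ B *m A = 1%:M) /\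
      forall x, H i (f x 0 i) = T (gam i) (hinv x 0 (gam i)) *m A + b.
Proof.
move=> mu0 hK hK' dT seT Lex dH [s hs] Zpos Eq cases.
have [B [N [c [BN NB rel]]]] := LR hK seT Lex (ex_intro _ s hs) Zpos Eq.
pose C l i := submxblock B l i.
pose D i l := submxblock N i l.
pose ci i := submxrow c i.
have relz : forall z i, H i (f (h z) 0 i) = \sum_l T l (z 0 l) *m C l i + ci i.
  move=> z i.
  have := congr1 (fun M : 'rV[R]_(\sum_l m l) => submxrow M i) (rel (h z)).
  rewrite /= mxrowK hK submxrowD -mul_submxrow mxrow_mul_sum => ->.
  congr (_ + _); apply: eq_bigr => l _; by rewrite /C submxblockEh.
have inj : forall i (eta : 'cV[R]_(m i)), (forall l, C l i *m eta = 0) -> eta = 0.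
  move=> i eta Ce.
  pose E := submxcol (1%:M : 'M[R]_(\sum_l m l)) i.
  have CE : forall l, submxcol B l *m E^T = C l i.
    by move=> l; rewrite /E tr_submxcol trmx1 mul_submxrow mulmx1 /C submxblockEv.
  have Bw : B *m (E^T *m eta) = 0.
    have Hl : forall l, submxcol (B *m (E^T *m eta)) l = 0.
      by move=> l; rewrite -submxcol_mul mulmxA CE Ce.
    by rewrite -[LHS]submxcolK (eq_mxcol Hl) mxcol0.
  have w0 : E^T *m eta = 0 by rewrite -[E^T *m eta]mul1mx -NB -mulmxA Bw mulmx0.
  have EE : E *m E^T = 1%:M.
    by rewrite /E tr_submxcol trmx1 mul_submxrow mulmx1 -submxblockEv blk1_diag.
  by rewrite -[eta]mul1mx -EE -mulmxA w0 mulmx0.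
have kpos : forall l, (0 < k l)%N.
  by move=> l; case: cases => [[k2 _]|[k1 _]]; [exact: leq_trans (k2 l) | rewrite k1].
have mpos : forall i, (0 < m i)%N by move=> i; rewrite hs.
have uniqC : forall i l1 l2, C l1 i != 0 -> C l2 i != 0 -> l1 = l2.
  move=> i.
  case: cases => [[k2 [_ [[_ [_ hd]] [finv [fK [fK' fd]]]]]]
                 |[k1 [nmon [[_ [_ hd]] [[finv [fK [fK' fd]]] uext]]]]].
  - have dh := (hd h (or_introl erefl)).1; have df := (fd f (or_introl erefl)).1.
    apply: (@coreA R d k (m i) T (fun l => C l i) (H i) (fun z => f (h z) 0 i) (ci i)).
    + by rewrite hs.
    + exact: dT.
    + exact: seT.
    + exact: dH.
    + move=> z.
      have -> : (fun z => f (h z) 0 i) = (fun M : 'rV[R]_d => M 0 i) \o (f \o h) by [].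
      apply: differentiable_comp; last exact: differentiable_coord.
      by apply: differentiable_comp; [exact: dh | exact: df].
    + exact: inj.
    + by move=> z; exact: (relz z i).
  - have dh := (hd h (or_introl erefl)).1; have df := (fd f (or_introl erefl)).1.
    apply: (@coreB_mx R d k (m i) T (fun l => C l i) (H i) (fun z => f (h z) 0 i) (ci i)).
    + exact: k1.
    + by rewrite hs k1.
    + exact: nmon.
    + exact: dH.
    + exact: uext.
    + move=> z.
      have -> : (fun z => f (h z) 0 i) = (fun M : 'rV[R]_d => M 0 i) \o (f \o h) by [].
      apply: differentiable_comp; last exact: differentiable_coord.
      by apply: differentiable_comp; [exact: dh | exact: df].
    + move=> t; exists (hinv (finv (t *: evec R i))).
      by rewrite hK' fK' /evec !mxE !eqxx /= mulr1.
    + by move=> z; exact: (relz z i).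
have exC : forall i, exists l, C l i != 0.
  move=> i; apply: contrapT => H0.
  have E1 : const_mx 1 = 0 :> 'cV[R]_(m i).
    apply: inj => l; have -> : C l i = 0.
      by apply/eqP; apply: contrapT => Hn; apply: H0; exists l; exact/negP.
    by rewrite mul0mx.
  move/matrixP: E1 => /(_ (Ordinal (mpos i)) 0); rewrite !mxE => /eqP.
  by rewrite oner_eq0.
pose g0 i := xchoose (exC i).
have Hg : forall i, C (g0 i) i != 0 by move=> i; exact: (xchooseP (exC i)).
have Cz : forall i l, l != g0 i -> C l i = 0.
  move=> i l; apply: contraNeq => Cl; apply/eqP; exact: uniqC Cl (Hg i).
have surj : forall l, exists i, C l i != 0.
  move=> l; apply: contrapT => H0.
  have := congr1 (fun M => submxblock M l l) BN; rewrite /= blk_mul blk1_diag.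
  rewrite big1 => [/matrixP/(_ (Ordinal (kpos l)) (Ordinal (kpos l)))|j _].
    by rewrite !mxE eqxx => /eqP; rewrite eq_sym oner_eq0.
  have -> : submxblock B l j = 0; last by rewrite mul0mx.
  by apply/eqP; apply: contrapT => Hn; apply: H0; exists j; exact/negP.
pose del l := xchoose (surj l).
have gd : forall l, g0 (del l) = l.
  move=> l; apply: esym; apply: uniqC (xchooseP (surj l)) (Hg _).
have [del' dK dK'] := injF_bij (can_inj gd).
have g0E : forall i, g0 i = del' i by move=> i; rewrite -{1}(dK' i) gd.
have g0inj : injective g0.
  by move=> i1 i2; rewrite !g0E => /(congr1 del); rewrite !dK'.
exists (perm g0inj) => i; rewrite permE.
pose A := C (g0 i) i.
pose B' := D i (g0 i).
have AB : A *m B' = 1%:M.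
  have := congr1 (fun M => submxblock M (g0 i) (g0 i)) BN; rewrite /= blk_mul blk1_diag.
  rewrite (bigD1 i) //= big1 ?addr0 // => j ji.
  have -> : submxblock B (g0 i) j = 0; last by rewrite mul0mx.
  by apply: Cz; apply: contra ji => /eqP /g0inj ->.
have BA : B' *m A = 1%:M.
  have := congr1 (fun M => submxblock M i i) NB; rewrite /= blk_mul blk1_diag.
  rewrite (bigD1 (g0 i)) //= big1 ?addr0 // => l li.
  have -> : submxblock B l i = 0; last by rewrite mulmx0.
  exact: Cz.
have mk : m i = k (g0 i).
  apply/eqP; rewrite eqn_leq; apply/andP; split.
  - have := mxrankM_maxl B' A; rewrite BA mxrank1 => h1.
    exact: leq_trans h1 (rank_leq_col B').
  - have := mxrankM_maxl A B'; rewrite AB mxrank1 => h1.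
    exact: leq_trans h1 (rank_leq_col A).
split => //.
exists A, (ci i); split; first by exists B'.
move=> x; have := relz (hinv x) i; rewrite hK' => ->.
congr (_ + _); rewrite (bigD1 (g0 i)) //= big1 ?addr0 // => l li.
by rewrite Cz // mulmx0.
Qed.
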